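(* Let $S$ be a compact semigroupoid with open multiplication, and let $T$ be a subsemigroupoid of $S$ that is factorial and dense in $S$. Then $S$ is equidivisible if and only if $T$ is equidivisible.
   Context: A semigroupoid is a graph (vertices, edges, source/range maps $\alpha,\omega$) with associative partial multiplication defined exactly on $D(S)=\{(s,t):\alpha(s)=\omega(t)\}$; $S^I$ adjoins a local identity at each vertex. A compact semigroupoid carries a compact Hausdorff topology in which vertices and edges form closed sets and $\alpha,\omega$ and multiplication are continuous; multiplication is open if $D(S)\to E(S)$ maps open sets to open sets. $T$ is factorial in $S$ if $st\in T$ implies $s,t\in T$. $S$ is equidivisible if whenever $uv=xy$ there is $t\in E(S^I)$ with ($ut=x$ and $v=ty$) or ($xt=u$ and $y=tv$) (for $T$, with $t\in E(T^I)$). *)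

(* Defs.v *)
From mathcomp Require Import all_boot all_order.
From mathcomp Require Import all_classical all_reals topology.
Set Implicit Arguments. Unset Strict Implicit. Unset Printing Implicit Defensive.
Local Open Scope classical_set_scope.

(* A semigroupoid with vertex type V and edge type E: source map alpha,
   range map omega, and a multiplication, only meaningful on
   D(S) = {(s,t) | alpha s = omega t}. *)
Record semigroupoid (V E : Type) := Semigroupoid {
  alpha : E -> V;
  omega : E -> V;
  mul : E -> E -> E;
  mul_alpha : forall s t, alpha s = omega t -> alpha (mul s t) = alpha t;
  mul_omega : forall s t, alpha s = omega t -> omega (mul s t) = omega s;
  mul_assoc : forall s t u, alpha s = omega t -> alpha t = omega u ->
    mul (mul s t) u = mul s (mul t u)
}.

Section Defs.
Context {V E : Type} (S : semigroupoid V E).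

Definition composable (s t : E) : Prop := alpha S s = omega S t.
Definition domS : set (E * E) := [set p | composable p.1 p.2].

(* S^I : edges E(S^I) = E + V, where [inr v] is the local identity at v. *)
Definition alphaI (a : E + V) : V := match a with inl e => alpha S e | inr v => v end.
Definition omegaI (a : E + V) : V := match a with inl e => omega S e | inr v => v end.
Definition composableI (a b : E + V) : Prop := alphaI a = omegaI b.
Definition mulI (a b : E + V) : E + V :=
  match a, b with
  | inl s, inl t => inl (mul S s t)
  | inl s, inr _ => inl s
  | inr _, inl t => inl t
  | inr v, inr _ => inr v
  end.

Definition subsemigroupoid (TV : set V) (TE : set E) : Prop :=
  (forall e, TE e -> TV (alpha S e) /\ TV (omega S e)) /\
  (forall s t, TE s -> TE t -> composable s t -> TE (mul S s t)).

Definition factorial_sub (TE : set E) : Prop :=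
  forall s t, composable s t -> TE (mul S s t) -> TE s /\ TE t.

(* The subsemigroupoid (TV,TE) is equidivisible (t ranging over E(T^I)).
   Equidivisibility of S itself is the case TV = setT, TE = setT. *)
Definition equidivisible_in (TV : set V) (TE : set E) : Prop :=
  forall u v x y, TE u -> TE v -> TE x -> TE y ->
    composable u v -> composable x y -> mul S u v = mul S x y ->
    exists t : E + V,
      (match t with inl e => TE e | inr w => TV w end) /\
      ((composableI (inl u) t /\ mulI (inl u) t = inl x /\
        composableI t (inl y) /\ inl v = mulI t (inl y)) \/
       (composableI (inl x) t /\ mulI (inl x) t = inl u /\
        composableI t (inl v) /\ inl y = mulI t (inl v))).

Definition equidivisible : Prop := equidivisible_in setT setT.
End Defs.

Section Top.
Context {V E : topologicalType} (S : semigroupoid V E).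

(* Compact semigroupoid: the space V + E is compact Hausdorff with vertices and
   edges closed (equivalently V and E are compact Hausdorff spaces), alpha, omega
   continuous, and multiplication continuous on D(S) (subspace topology). *)
Definition compact_semigroupoid : Prop :=
  compact [set: V] /\ hausdorff_space V /\
  compact [set: E] /\ hausdorff_space E /\
  continuous (alpha S) /\ continuous (omega S) /\
  {within domS S, continuous (fun p : E * E => mul S p.1 p.2)}.

Definition open_multiplication : Prop :=
  forall U : set (E * E), open U ->
    open ((fun p : E * E => mul S p.1 p.2) @` (U `&` domS S)).

(* T = (TV, TE) is dense in S (in V + E, i.e. TV dense in V and TE dense in E). *)
Definition dense_sub (TV : set V) (TE : set E) : Prop := dense TV /\ dense TE.
End Top.

(* Main.v *)
Require Import Defs.
From mathcomp Require Import all_boot all_order.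
From mathcomp Require Import all_classical all_reals topology.
Set Implicit Arguments. Unset Strict Implicit. Unset Printing Implicit Defensive.
Local Open Scope classical_set_scope.

Lemma neq_near (Z X : topologicalType) (f g : Z -> X) z :
  hausdorff_space X -> {for z, continuous f} -> {for z, continuous g} ->
  f z <> g z -> \forall z' \near z, f z' <> g z'.
Proof.
move=> hX cf cg fg.
have : f z != g z by apply/eqP.
move: hX; rewrite open_hausdorff => hX /hX [[A B] /= [fA gB] [oA oB /eqP AB0]].
have nA : nbhs (f z) A by apply: open_nbhs_nbhs; split => //; rewrite -inE.
have nB : nbhs (g z) B by apply: open_nbhs_nbhs; split => //; rewrite -inE.
have := cf _ nA; have := cg _ nB; rewrite !nbhs_simpl /= => hB hA.
near=> z' => e.
have : (A `&` B) (f z') by split; [apply: (near hA z')| rewrite e; apply: (near hB z')].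
by rewrite AB0.
Unshelve. all: end_near. Qed.

Lemma mul_near (V E Z : topologicalType) (S : semigroupoid V E) (f g h : Z -> E) z :
  hausdorff_space E ->
  {within domS S, continuous (fun p : E * E => Defs.mul S p.1 p.2)} ->
  {for z, continuous f} -> {for z, continuous g} -> {for z, continuous h} ->
  composable S (f z) (g z) -> Defs.mul S (f z) (g z) <> h z ->
  \forall z' \near z, composable S (f z') (g z') -> Defs.mul S (f z') (g z') <> h z'.
Proof.
move=> hE cm cf cg ch Dz ne.
have : Defs.mul S (f z) (g z) != h z by apply/eqP.
move: hE; rewrite open_hausdorff => hE /hE [[A B] /= [fA gB] [oA oB /eqP AB0]].
have nA : nbhs (Defs.mul S (f z) (g z)) A by apply: open_nbhs_nbhs; split => //; rewrite -inE.
have nB : nbhs (h z) B by apply: open_nbhs_nbhs; split => //; rewrite -inE.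
have := ch _ nB; rewrite nbhs_simpl /= => hB.
move/subspace_continuousP : cm => /(_ (f z, g z) Dz) /(_ _ nA).
rewrite nbhs_simpl /= => /= hA.
have kc : (fun z' => (f z', g z')) @ nbhs z --> nbhs (f z, g z).
  exact: cvg_pair.
have := kc _ hA; rewrite nbhs_simpl /= => hA'.
near=> z' => Dz' e.
have : (A `&` B) (h z').
  split; last by apply: (near hB z').
  rewrite -e; exact: (near hA' z') Dz'.
by rewrite AB0.
Unshelve. all: end_near. Qed.

Definition Arel (V E : Type) (S : semigroupoid V E) (u v x y t : E) : Prop :=
  composable S u t /\ Defs.mul S u t = x /\ composable S t y /\ v = Defs.mul S t y.

Lemma robustA (V E Z : topologicalType) (S : semigroupoid V E)
  (fu fv fx fy ft : Z -> E) z :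
  hausdorff_space V -> hausdorff_space E ->
  continuous (Defs.alpha S) -> continuous (Defs.omega S) ->
  {within domS S, continuous (fun p : E * E => Defs.mul S p.1 p.2)} ->
  {for z, continuous fu} -> {for z, continuous fv} -> {for z, continuous fx} ->
  {for z, continuous fy} -> {for z, continuous ft} ->
  ~ Arel S (fu z) (fv z) (fx z) (fy z) (ft z) ->
  \forall z' \near z, ~ Arel S (fu z') (fv z') (fx z') (fy z') (ft z').
Proof.
move=> hV hE ca co cm cu cv cx cy ct nA.
have cal (f : Z -> E) : {for z, continuous f} -> {for z, continuous (Defs.alpha S \o f)}.
  by move=> cf; apply: continuous_comp => //; apply: ca.
have com (f : Z -> E) : {for z, continuous f} -> {for z, continuous (Defs.omega S \o f)}.
  by move=> cf; apply: continuous_comp => //; apply: co.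
have [D1|D1] := pselect (composable S (fu z) (ft z)); last first.
  have := neq_near hV (cal _ cu) (com _ ct) D1.
  by apply: filterS => z' h [].
have [M1|M1] := pselect (Defs.mul S (fu z) (ft z) = fx z); last first.
  have := mul_near hE cm cu ct cx D1 M1.
  by apply: filterS => z' h [h1 [h2 _]]; exact: h h1 h2.
have [D2|D2] := pselect (composable S (ft z) (fy z)); last first.
  have := neq_near hV (cal _ ct) (com _ cy) D2.
  by apply: filterS => z' h [_ [_ [h3 _]]].
have M2 : Defs.mul S (ft z) (fy z) <> fv z by move=> e; apply: nA.
have := mul_near hE cm ct cy cv D2 M2.
by apply: filterS => z' h [_ [_ [h3 h4]]]; exact: h h3 (esym h4).
Qed.
Lemma cfst (A B : topologicalType) (p : A * B) : {for p, continuous fst}.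
Proof. exact: cvg_fst. Qed.
Lemma csnd (A B : topologicalType) (p : A * B) : {for p, continuous snd}.
Proof. exact: cvg_snd. Qed.

Theorem mainTheorem11 (V E : topologicalType) (S : semigroupoid V E)
  (TV : set V) (TE : set E) :
  compact_semigroupoid S -> open_multiplication S ->
  subsemigroupoid S TV TE -> factorial_sub S TE -> dense_sub TV TE ->
  (equidivisible S <-> equidivisible_in S TV TE).
Proof.
move=> [cV [hV [cE [hE [ca [co cm]]]]]] om [subT1 subT2] fac [dTV dTE].
split.
  move=> eqS u v x y Tu Tv Tx Ty cuv cxy e.
  have [t [_ H]] := eqS u v x y I I I I cuv cxy e.
  case: t H => [t|w] H.
    exists (inl t); split => //.
    case: H => [[c1 [m1 rest]]|[c1 [m1 rest]]].
    - have : TE (Defs.mul S u t) by case: m1 => ->.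
      by case/(fac _ _ c1).
    - have : TE (Defs.mul S x t) by case: m1 => ->.
      by case/(fac _ _ c1).
  exists (inr w); split => //.
  case: H => [[c1 _]|[c1 _]]; rewrite /composableI /= in c1; rewrite -c1.
  - exact: (subT1 u Tu).1.
  - exact: (subT1 x Tx).1.
move=> eqT u v x y _ _ _ _ cuv cxy e.
apply: contrapT => nE.
have H0 : ~ (u = x /\ v = y).
  move=> [eux evy]; apply: nE; exists (inr (Defs.alpha S x)); split => //.
  left; rewrite eux evy; split => //; split => //.
have HA : forall t, ~ Arel S u v x y t.
  move=> t [a [b [c d]]]; apply: nE; exists (inl t); split => //; left.
  by rewrite /composableI /= b d.
have HB : forall t, ~ Arel S x y u v t.
  move=> t [a [b [c d]]]; apply: nE; exists (inl t); split => //; right.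
  by rewrite /composableI /= b d.
pose i0 : (E * E) * (E * E) := ((u, v), (x, y)).
pose P (i : (E * E) * (E * E)) (t : E) :=
  ~ Arel S i.1.1 i.1.2 i.2.1 i.2.2 t /\ ~ Arel S i.2.1 i.2.2 i.1.1 i.1.2 t.
have cov : \forall i \near i0, [set: E] `<=` P i.
  move: cE; rewrite compact_near_coveringP => /(_ _ (nbhs i0) P _); apply.
  move=> t _.
  have c1 : {for (t, i0), continuous (fun p : E * ((E * E) * (E * E)) => p.2.1.1)}.
    apply: continuous_comp; first apply: continuous_comp; first exact: csnd.
      exact: cfst. exact: cfst.
  have c2 : {for (t, i0), continuous (fun p : E * ((E * E) * (E * E)) => p.2.1.2)}.
    apply: continuous_comp; first apply: continuous_comp; first exact: csnd.
      exact: cfst. exact: csnd.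
  have c3 : {for (t, i0), continuous (fun p : E * ((E * E) * (E * E)) => p.2.2.1)}.
    apply: continuous_comp; first apply: continuous_comp; first exact: csnd.
      exact: csnd. exact: cfst.
  have c4 : {for (t, i0), continuous (fun p : E * ((E * E) * (E * E)) => p.2.2.2)}.
    apply: continuous_comp; first apply: continuous_comp; first exact: csnd.
      exact: csnd. exact: csnd.
  have c5 : {for (t, i0), continuous (fun p : E * ((E * E) * (E * E)) => p.1)}.
    exact: cfst.
  have r1 := robustA hV hE ca co cm c1 c2 c3 c4 c5 (HA t).
  have r2 := robustA hV hE ca co cm c3 c4 c1 c2 c5 (HB t).
  have r1' : (\forall x' \near t & i \near nbhs i0, ~ Arel S i.1.1 i.1.2 i.2.1 i.2.2 x') := r1.
  have r2' : (\forall x' \near t & i \near nbhs i0, ~ Arel S i.2.1 i.2.2 i.1.1 i.1.2 x') := r2.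
  move: r1' r2'; apply: filterS2 => p h1 h2; split; [exact: h1 | exact: h2].
have Hid : \forall i \near i0, ~ (i.1.1 = i.2.1 /\ i.1.2 = i.2.2).
  have d11 : {for i0, continuous (fun i : (E * E) * (E * E) => i.1.1)}.
    by apply: continuous_comp; [exact: cfst | exact: cfst].
  have d12 : {for i0, continuous (fun i : (E * E) * (E * E) => i.1.2)}.
    by apply: continuous_comp; [exact: cfst | exact: csnd].
  have d21 : {for i0, continuous (fun i : (E * E) * (E * E) => i.2.1)}.
    by apply: continuous_comp; [exact: csnd | exact: cfst].
  have d22 : {for i0, continuous (fun i : (E * E) * (E * E) => i.2.2)}.
    by apply: continuous_comp; [exact: csnd | exact: csnd].
  have [nux|nux] := pselect (u = x).
    have nvy : v <> y by move=> h; apply: H0.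
    have := neq_near hE d12 d22 nvy.
    by apply: filterS => i hi [_ ?].
  have := neq_near hE d11 d21 nux.
  by apply: filterS => i hi [? _].
have := filterI cov Hid.
case=> [[N1 N2] /= [n1 n2] sub].
move: n1 n2; rewrite !nbhsE => -[O1 [oO1 O1uv] sO1] [O2 [oO2 O2xy] sO2].
have oW1 := om _ oO1; have oW2 := om _ oO2.
have [z [[W1z W2z] Tz]] : ((fun p : E * E => Defs.mul S p.1 p.2) @` (O1 `&` domS S)
   `&` (fun p : E * E => Defs.mul S p.1 p.2) @` (O2 `&` domS S)) `&` TE !=set0.
  apply: dTE; last exact: openI.
  exists (Defs.mul S u v); split; first by exists (u, v).
  by exists (x, y) => //; rewrite e.
case: W1z => -[a b] [O1ab Dab] /= eab.
case: W2z => -[c d] [O2cd Dcd] /= ecd.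
have [Ta Tb] : TE a /\ TE b by apply: fac => //; rewrite eab.
have [Tc Td] : TE c /\ TE d by apply: fac => //; rewrite ecd.
have [HP Hnid] := sub ((a, b), (c, d)) (conj (sO1 _ O1ab) (sO2 _ O2cd)).
have [t [_ H]] := eqT a b c d Ta Tb Tc Td Dab Dcd (etrans eab (esym ecd)).
case: t H => [t|w] H.
  case: H => [[h1 [h2 [h3 h4]]]|[h1 [h2 [h3 h4]]]].
  - apply: (HP t I).1; split => //; split; first by case: h2.
    by split => //; case: h4.
  - apply: (HP t I).2; split => //; split; first by case: h2.
    by split => //; case: h4.
case: H => [[h1 [h2 [h3 h4]]]|[h1 [h2 [h3 h4]]]]; apply: Hnid => /=.
- by case: h2 => ->; case: h4 => ->.
- by case: h2 => ->; case: h4 => ->.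
Qed.
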